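(* Let $\varphi$ be a skew-morphism of a finite group $A$ of order $n$ with power function $\pi:A\to\mathbb{Z}_n$, and let $\bar\varphi$ be the induced skew-morphism of $\bar A=A/\mathrm{Core}\,\varphi$. For any $x\in A$ the following are equivalent: (i) $x\in\mathrm{Smooth}\,\varphi$; (ii) $\pi(\varphi^i(x))=\pi(x)$ for all nonnegative integers $i$; (iii) $\bar x=x\,\mathrm{Core}\,\varphi\in\mathrm{Fix}\,\bar\varphi$.
   Context: A skew-morphism of a finite group $A$ is a permutation $\varphi$ of the set $A$ with $\varphi(1)=1$ for which there exists a function $\pi:A\to\mathbb{Z}_n$, where $n$ is the order of $\varphi$ as a permutation, such that $\varphi(xy)=\varphi(x)\varphi^{\pi(x)}(y)$ for all $x,y\in A$; $\pi$ is the power function. The kernel is $\mathrm{Ker}\,\varphi=\{x\in A:\pi(x)=1\}$ (a subgroup of $A$), and the core is $\mathrm{Core}\,\varphi=\bigcap_{i=1}^n\varphi^i(\mathrm{Ker}\,\varphi)$, a $\varphi$-invariant normal subgroup of $A$ contained in $\mathrm{Ker}\,\varphi$. For a $\varphi$-invariant normal subgroup $N$ of $A$, the induced skew-morphism $\bar\varphi$ of $A/N$ is $\bar\varphi(xN)=\varphi(x)N$, with power function $\bar\pi(xN)\equiv\pi(x)\pmod{|\bar\varphi|}$. $\mathrm{Fix}\,\psi$ denotes the set of fixed points of a permutation $\psi$. $\mathrm{Smooth}\,\varphi=\{x\in A:\varphi(x)\in x\,\mathrm{Core}\,\varphi\}$. *)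

(* Defs.v *)
From HB Require Import structures.
From mathcomp Require Import all_boot all_fingroup.
Set Implicit Arguments. Unset Strict Implicit. Unset Printing Implicit Defensive.

Local Open Scope group_scope.

(* The finite group A is the whole carrier of gT; phi : {perm gT} is a
   permutation of A, and the power function takes values in nat, read
   modulo n = #[phi] (the order of phi as a permutation), i.e. in Z_n. *)

Section Skew.
Variable gT : finGroupType.

Definition is_skew_morphism (phi : {perm gT}) (pi : gT -> nat) : Prop :=
  phi 1 = 1 /\ forall x y : gT, phi (x * y) = phi x * (phi ^+ pi x) y.

Definition skew_ker (phi : {perm gT}) (pi : gT -> nat) : {set gT} :=
  [set x | pi x == 1 %[mod #[phi]]].

Definition skew_core (phi : {perm gT}) (pi : gT -> nat) : {set gT} :=
  \bigcap_(i < #[phi]) ((phi ^+ i.+1) @: skew_ker phi pi).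

Definition skew_smooth (phi : {perm gT}) (pi : gT -> nat) : {set gT} :=
  [set x | phi x \in x *: skew_core phi pi].

Definition induced_skew (phi : {perm gT}) (N : {set gT})
  (X : coset_of N) : coset_of N := coset N (phi (repr X)).

End Skew.

Definition Fix (T : finType) (f : T -> T) : {set T} := [set X | f X == X].

Arguments induced_skew {gT} phi N X.

(* Main.v *)
Require Import Defs.
From HB Require Import structures.
From mathcomp Require Import all_boot all_fingroup.
From mathcomp Require Import cyclic zify.

Set Implicit Arguments. Unset Strict Implicit. Unset Printing Implicit Defensive.
Local Open Scope group_scope.

Section SkewProofs.
Variables (gT : finGroupType) (phi : {perm gT}) (pi : gT -> nat).
Hypothesis H1 : phi 1 = 1.
Hypothesis HM : forall x y : gT, phi (x * y) = phi x * (phi ^+ pi x) y.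

Local Notation P k := (phi ^+ k).

Fixpoint sig (v : gT) (k : nat) : nat :=
  if k is k'.+1 then sig v k' + pi (P k' v) else 0.

Lemma PP a b y : P a (P b y) = P (b + a) y.
Proof. by rewrite expgD permM. Qed.

Lemma PS k y : P k.+1 y = phi (P k y).
Proof. by rewrite expgSr permM. Qed.

Lemma P1 k : P k 1 = 1.
Proof. by elim: k => [|k IH]; rewrite ?expg0 ?perm1 // PS IH H1. Qed.

Lemma L2 k v y : P k (v * y) = P k v * P (sig v k) y.
Proof.
elim: k => [|k IH]; first by rewrite !expg0 !perm1.
by rewrite PS PS IH HM /= -PP.
Qed.

Lemma cancelP (f g : {perm gT}) u : (forall y, u * f y = u * g y) -> f = g.
Proof. by move=> H; apply/permP => y; apply: (mulgI u). Qed.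

Lemma L3 k l v : P k = P l -> P (sig v k) = P (sig v l).
Proof.
move=> E; apply: (@cancelP _ _ (P k v)) => y.
by rewrite -L2 E L2.
Qed.

Lemma L4 u v : P (pi (u * v)) = P (sig v (pi u)).
Proof.
apply: (@cancelP _ _ (phi (u * v))) => y.
by rewrite -HM -mulgA !HM L2 mulgA.
Qed.

Lemma L5 : P (pi 1) = phi.
Proof.
apply/permP => y; have := HM 1 y; by rewrite mul1g H1 mul1g => <-.
Qed.

Lemma L6 w w' k : (forall i, P (pi (P i w)) = P (pi (P i w'))) ->
  P (sig w k) = P (sig w' k).
Proof.
move=> H; elim: k => [|k IH] //=.
by rewrite !expgD IH H.
Qed.

Lemma sig1 k : P (sig 1 k) = P k.
Proof.
elim: k => [|k IH] //=.
by rewrite expgD IH P1 L5 expgSr.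
Qed.

Definition inC y := forall j, P (pi (P j y)) = phi.

Lemma sigC c k : inC c -> P (sig c k) = P k.
Proof.
move=> Hc; rewrite -(sig1 k); apply: L6 => i; by rewrite Hc P1 L5.
Qed.

Lemma inC_P c m : inC c -> inC (P m c).
Proof. by move=> Hc j; rewrite PP Hc. Qed.

Lemma piCl u v : inC u -> P (pi (u * v)) = P (pi v).
Proof.
move=> Hu; rewrite L4 (@L3 _ 1); last by have := Hu 0; rewrite expg0 perm1 expg1.
by rewrite /= add0n expg0 perm1.
Qed.

Lemma Pinv j a : P j a^-1 = (P (sig a^-1 j) a)^-1.
Proof.
have := L2 j a^-1 a; rewrite mulVg P1 => /esym E.
by rewrite -[P j a^-1]mulg1 -(mulgV (P (sig a^-1 j) a)) mulgA E mul1g.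
Qed.

Lemma L8 c b : inC c -> P (pi (b^-1 * c * b)) = phi.
Proof.
move=> Hc; rewrite -mulgA L4.
rewrite (@L6 (c * b) b); first by rewrite -L4 mulVg L5.
move=> i.
rewrite L2 (sigC _ Hc) piCl //; exact: inC_P.
Qed.

Lemma inC_conj c a : inC c -> inC (c ^ a).
Proof.
move=> Hc j; rewrite /conjg L2 L2 (sigC _ Hc) Pinv mulgA.
apply: L8; exact: inC_P.
Qed.

Lemma inC1 : inC 1.
Proof. by move=> j; rewrite P1 L5. Qed.

Lemma inCM x y : inC x -> inC y -> inC (x * y).
Proof. by move=> Hx Hy j; rewrite L2 (sigC _ Hx) piCl ?Hy //; exact: inC_P. Qed.

Lemma ord_gt0 : 0 < #[phi].
Proof. exact: order_gt0. Qed.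

Lemma core_inC y : (y \in skew_core phi pi) <-> inC y.
Proof.
have Hker : forall z, (z \in skew_ker phi pi) = (P (pi z) == phi).
  by move=> z; rewrite inE -eq_expg_mod_order expg1.
split.
- move/bigcapP => H j.
  have Hlt : #[phi] - j %% #[phi] - 1 < #[phi].
    by have := ord_gt0; lia.
  have := H (Ordinal Hlt) isT => /imsetP [k Hk ->].
  rewrite PP /=.
  have -> : P ((#[phi] - j %% #[phi] - 1).+1 + j) = 1.
    apply/eqP; rewrite -order_dvdn.
    have Hm : j %% #[phi] < #[phi] by rewrite ltn_mod ord_gt0.
    rewrite -subnDA addn1 subnSK // {2}(divn_eq j #[phi]) addnCA (subnK (ltnW Hm)).
    by rewrite dvdn_add // dvdn_mull.
  by rewrite perm1; apply/eqP; rewrite -Hker.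
- move=> H; apply/bigcapP => i _; apply/imsetP.
  exists (P (#[phi] - i.+1) y); first by rewrite Hker H.
  rewrite PP subnK ?expg_order ?perm1 //.
Qed.

Lemma ii_S x : (forall i, P (pi (P i x)) = P (pi x)) -> inC (x^-1 * phi x).
Proof.
move=> Hx j; rewrite L2 Pinv.
set m := sig x^-1 j.
have -> : P m (phi x) = phi (P m x).
  have -> : phi x = P 1 x by rewrite expg1.
  by rewrite PP add1n PS.
set w := P m x.
rewrite L4 (@L6 (phi w) w); first by rewrite -L4 mulVg L5.
by move=> i; rewrite /w -PS !PP !Hx.
Qed.

Lemma S_step w : inC (w^-1 * phi w) ->
  inC ((phi w)^-1 * phi (phi w)) /\ P (pi (phi w)) = P (pi w).
Proof.
move=> Hc; have E : phi w = w * (w^-1 * phi w) by rewrite mulKVg.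
split.
  rewrite {2}E (HM w) mulKg; exact: inC_P.
by rewrite {1}E L4 sigC.
Qed.

Lemma S_all x : inC (x^-1 * phi x) ->
  forall i, inC ((P i x)^-1 * phi (P i x)) /\ P (pi (P i x)) = P (pi x).
Proof.
move=> H0; elim=> [|i [IH1 IH2]]; first by rewrite expg0 perm1.
have [A B] := S_step IH1; by rewrite PS B.
Qed.

End SkewProofs.

Theorem proposition3 (gT : finGroupType) (phi : {perm gT}) (pi : gT -> nat)
  (Hskew : is_skew_morphism phi pi) (x : gT) :
  [/\ (x \in skew_smooth phi pi) <->
        (forall i : nat, pi ((phi ^+ i)%g x) = pi x %[mod #[phi]%g]),
      (forall i : nat, pi ((phi ^+ i)%g x) = pi x %[mod #[phi]%g]) <->
        (coset (skew_core phi pi) x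
           \in Fix (induced_skew phi (skew_core phi pi))) &
      (coset (skew_core phi pi) x
           \in Fix (induced_skew phi (skew_core phi pi))) <->
        (x \in skew_smooth phi pi)].
Proof.
move: Hskew => [H1 HM].
have CE : forall y, y \in skew_core phi pi <-> inC phi pi y by move=> y; exact: core_inC.
have gC : group_set (skew_core phi pi).
  apply/group_setP; split; first by apply/CE; exact: inC1.
  by move=> a b /CE Ha /CE Hb; apply/CE; exact: inCM.
pose G := Group gC.
have nC : forall a, a \in 'N(G).
  move=> a; rewrite inE; apply/subsetP => y; rewrite mem_conjg => /CE Hy.
  by apply/CE; have := inC_conj H1 HM a Hy; rewrite conjgKV.
have cosE : forall y z, coset G y = coset G z <-> y * z^-1 \in G.
  move=> y z; rewrite -mem_rcoset; split; by move/(rcoset_kercosetP (nC y) (nC z)).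
have iS : x \in skew_smooth phi pi <-> x^-1 * phi x \in G.
  by rewrite inE mem_lcoset.
have iiS : (forall i : nat, pi ((phi ^+ i)%g x) = pi x %[mod #[phi]%g]) <->
           x^-1 * phi x \in G.
  split.
    move=> H; apply/CE; apply: ii_S => // i.
    by rewrite -expg_mod_order H expg_mod_order.
  move=> /CE H i; have [_ E] := S_all H1 HM H i.
  by apply/eqP; rewrite -eq_expg_mod_order; apply/eqP.
have iiiS : coset (skew_core phi pi) x
           \in Fix (induced_skew phi (skew_core phi pi)) <-> x^-1 * phi x \in G.
  rewrite inE /induced_skew.
  set r := repr _.
  have Er : coset G r = coset G x by rewrite /r coset_reprK.
  have /cosE Hr := Er.
  set c := r * x^-1 in Hr.
  have rE : r = c * x by rewrite /c mulgKV.
  have Pc : (phi ^+ pi c) = phi.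
    by have /CE Hc := Hr; have := Hc 0; rewrite expg0 perm1.
  have phic : phi c \in G.
    by apply/CE; have /CE Hc := Hr; have := inC_P 1 Hc; rewrite expg1.
  have key : phi r * x^-1 = phi c * (phi x * x^-1) by rewrite rE HM Pc mulgA.
  split.
    move/eqP/cosE; rewrite key groupMl // => H.
    by rewrite -(memJ_norm _ (nC x)) /conjg mulgKV in H.
  move=> H; apply/eqP/cosE; rewrite key groupMl //.
  by rewrite -(memJ_norm _ (nC x)) /conjg mulgKV.
split.
- by rewrite iS iiS.
- by rewrite iiS iiiS.
- by rewrite iiiS iS.
Qed.
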